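(* Let $R$ be a ring with local units. If there is a trace $t$ on $R$ (with values in some ring) which is injective on the set of idempotents of $R$, then $R$ is directly finite. If $R$ is a $*$-ring with local units and there is a trace on $R$ which is injective on the set of projections (self-adjoint idempotents) of $R$, then $R$ is finite. In particular, a $*$-ring with local units admitting a faithful trace with values in a $*$-ring is finite.
   Context: Rings are associative, not necessarily unital. A ring $R$ has local units if for every finite subset $\{x_1,\dots,x_n\}\subseteq R$ there is an idempotent $u\in R$ with $x_iu=ux_i=x_i$ for all $i$. A ring with local units is directly finite if for all $x,y\in R$ and every idempotent $u$ with $xu=ux=x$ and $yu=uy=y$, $xy=u$ implies $yx=u$. A $*$-ring (ring with involution $x\mapsto x^*$: additive, $(xy)^*=y^*x^*$, $x^{**}=x$) with local units is finite if for all $x\in R$ and every idempotent $u$ with $xu=ux=x$, $xx^*=u$ implies $x^*x=u$. A trace is an additive map $t$ with $t(xy)=t(yx)$. In a $*$-ring, $x\ge0$ means $x$ is a finite sum of elements $zz^*$, and $x>0$ means $x\ge0$, $x\ne0$; a trace between $*$-rings is faithful if $x\ge0\Rightarrow t(x)\ge0$ and $x>0\Rightarrow t(x)>0$. *)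

(* Defs.v *)
(* Non-unital (associative) rings are not in MathComp
   (its ring structures are unital), so we define them as a zmodType
   equipped with an associative, biadditive multiplication. *)
From HB Require Import structures.
From mathcomp Require Import all_boot all_order all_algebra.
Set Implicit Arguments. Unset Strict Implicit. Unset Printing Implicit Defensive.
Import GRing.Theory.
Local Open Scope ring_scope.

Record nuring := NURing {
  nr_sort :> zmodType;
  nr_mul : nr_sort -> nr_sort -> nr_sort;
  nr_mulA : forall x y z, nr_mul x (nr_mul y z) = nr_mul (nr_mul x y) z;
  nr_mulDl : forall x y z, nr_mul (x + y) z = nr_mul x z + nr_mul y z;
  nr_mulDr : forall x y z, nr_mul x (y + z) = nr_mul x y + nr_mul x z
}.
Arguments nr_mul {n}.

Record nustarring := NUStarRing {
  nsr_base :> nuring;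
  nsr_star : nsr_base -> nsr_base;
  nsr_starD : forall x y, nsr_star (x + y) = nsr_star x + nsr_star y;
  nsr_starM : forall x y, nsr_star (nr_mul x y) = nr_mul (nsr_star y) (nsr_star x);
  nsr_starK : forall x, nsr_star (nsr_star x) = x
}.
Arguments nsr_star {n}.

Definition idempotent (R : nuring) (u : R) : Prop := nr_mul u u = u.

Definition unit_for (R : nuring) (u x : R) : Prop :=
  nr_mul x u = x /\ nr_mul u x = x.

Definition has_local_units (R : nuring) : Prop :=
  forall s : seq R, exists u : R, idempotent u /\ forall x, x \in s -> unit_for u x.

Definition directly_finite (R : nuring) : Prop :=
  forall (x y u : R), idempotent u -> unit_for u x -> unit_for u y ->
    nr_mul x y = u -> nr_mul y x = u.

Definition star_finite (R : nustarring) : Prop :=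
  forall (x u : R), idempotent u -> unit_for u x ->
    nr_mul x (nsr_star x) = u -> nr_mul (nsr_star x) x = u.

Definition is_trace (R S : nuring) (t : R -> S) : Prop :=
  (forall x y, t (x + y) = t x + t y) /\
  (forall x y, t (nr_mul x y) = t (nr_mul y x)).

Definition projection (R : nustarring) (p : R) : Prop :=
  idempotent p /\ nsr_star p = p.

Definition injective_on_idempotents (R S : nuring) (t : R -> S) : Prop :=
  forall e f : R, idempotent e -> idempotent f -> t e = t f -> e = f.

Definition injective_on_projections (R : nustarring) (S : nuring) (t : R -> S) : Prop :=
  forall p q : R, projection p -> projection q -> t p = t q -> p = q.

Definition star_nonneg (R : nustarring) (x : R) : Prop :=
  exists s : seq R, x = \sum_(z <- s) nr_mul z (nsr_star z).

Definition star_pos (R : nustarring) (x : R) : Prop :=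
  star_nonneg x /\ x <> 0.

Definition faithful_trace (R S : nustarring) (t : R -> S) : Prop :=
  is_trace (t : nsr_base R -> nsr_base S) /\
  (forall x : R, star_nonneg x -> star_nonneg (t x)) /\
  (forall x : R, star_pos x -> star_pos (t x)).

(* Main.v *)
Require Import Defs.
From mathcomp Require Import all_boot all_order all_algebra.
Import GRing.Theory.
Local Open Scope ring_scope.

Lemma dbl0 (V : zmodType) (a : V) : a = a + a -> a = 0.
Proof. by move=> h; apply: (@addrI _ a); rewrite addr0 -h. Qed.

Lemma nmulr0 (R : nuring) (x : R) : nr_mul x 0 = 0.
Proof. by apply: dbl0; rewrite -nr_mulDr addr0. Qed.
Lemma nmul0r (R : nuring) (x : R) : nr_mul 0 x = 0.
Proof. by apply: dbl0; rewrite -nr_mulDl addr0. Qed.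
Lemma nmulrN (R : nuring) (x y : R) : nr_mul x (- y) = - nr_mul x y.
Proof. by apply: (@addrI _ (nr_mul x y)); rewrite -nr_mulDr !subrr nmulr0. Qed.
Lemma nmulNr (R : nuring) (x y : R) : nr_mul (- x) y = - nr_mul x y.
Proof. by apply: (@addrI _ (nr_mul x y)); rewrite -nr_mulDl !subrr nmul0r. Qed.
Lemma nmulrB (R : nuring) (x y z : R) : nr_mul x (y - z) = nr_mul x y - nr_mul x z.
Proof. by rewrite nr_mulDr nmulrN. Qed.
Lemma nmulBr (R : nuring) (x y z : R) : nr_mul (x - y) z = nr_mul x z - nr_mul y z.
Proof. by rewrite nr_mulDl nmulNr. Qed.
Lemma nstar0 (R : nustarring) : nsr_star (0 : R) = 0.
Proof. by apply: dbl0; rewrite -nsr_starD addr0. Qed.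
Lemma nstarN (R : nustarring) (x : R) : nsr_star (- x) = - nsr_star x.
Proof. by apply: (@addrI _ (nsr_star x)); rewrite -nsr_starD !subrr nstar0. Qed.
Lemma tr0 (R S : nuring) (t : R -> S) : is_trace t -> t 0 = 0.
Proof. by case=> hD _; apply: dbl0; rewrite -hD addr0. Qed.
Lemma trB (R S : nuring) (t : R -> S) x y : is_trace t -> t (x - y) = t x - t y.
Proof.
move=> ht; have [hD _] := ht; rewrite hD; congr (_ + _).
by apply: (@addrI _ (t y)); rewrite -hD !subrr tr0.
Qed.

Lemma star_facts (R : nustarring) (x u : R) : unit_for u x ->
  nr_mul x (nsr_star x) = u ->
  [/\ nsr_star u = u, Defs.idempotent (nr_mul (nsr_star x) x),
      nsr_star (nr_mul (nsr_star x) x) = nr_mul (nsr_star x) x,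
      nr_mul u (nr_mul (nsr_star x) x) = nr_mul (nsr_star x) x &
      nr_mul (nr_mul (nsr_star x) x) u = nr_mul (nsr_star x) x].
Proof.
move=> [xu ux] hu.
have su : nsr_star u = u by rewrite -hu nsr_starM nsr_starK.
have xsu : nr_mul (nsr_star x) u = nsr_star x.
  by rewrite -su -nsr_starM ux.
have uxs : nr_mul u (nsr_star x) = nsr_star x.
  by rewrite -su -nsr_starM xu.
split => //.
- by rewrite /Defs.idempotent nr_mulA -[nr_mul (nr_mul _ x) _]nr_mulA hu xsu.
- by rewrite nsr_starM nsr_starK.
- by rewrite nr_mulA uxs.
- by rewrite -nr_mulA xu.
Qed.

Theorem proposition4p2 :
  (forall (R S : nuring) (t : R -> S),
      has_local_units R -> is_trace t -> injective_on_idempotents t ->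
      directly_finite R) /\
  (forall (R : nustarring) (S : nuring) (t : R -> S),
      has_local_units R -> is_trace t -> injective_on_projections t ->
      star_finite R) /\
  (forall (R S : nustarring) (t : R -> S),
      has_local_units R -> faithful_trace t -> star_finite R).
Proof.
split; [|split].
- move=> R S t _ ht hi x y u hu [xu ux] [yu uy] hxy.
  apply: hi => //; last by rewrite (proj2 ht) hxy.
  by rewrite /Defs.idempotent nr_mulA -[nr_mul (nr_mul y x) y]nr_mulA hxy yu.
- move=> R S t _ ht hi x u hu ux hxx.
  have [su he hs _ _] := @star_facts R x u ux hxx.
  apply: hi => //; last by rewrite (proj2 ht) hxx.
- move=> R S t _ [ht [_ hpos]] x u hu ux hxx.
  have [su he hs h1 h2] := @star_facts R x u ux hxx.
  set p := nr_mul (nsr_star x) x in he hs h1 h2 *.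
  have [/eqP d|nd] := boolP (u - p == 0).
    by apply/eqP; rewrite eq_sym -subr_eq0 d.
  have hnn : star_nonneg (u - p).
    exists [:: u - p]; rewrite big_cons big_nil addr0.
    rewrite nsr_starD nstarN su hs nmulrB !nmulBr hu h1 h2 he.
    by rewrite opprB addrA subrK.
  have [_ H] := hpos _ (conj hnn (fun e => (negP nd) (introT eqP e))).
  exfalso; apply: H.
  by rewrite (@trB _ _ t u p ht) -hxx (proj2 ht) subrr.
Qed.
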